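(* Suppose the $n$ units are partitioned into $L$ blocks (matched subclasses), block $l$ containing $n_{l(0)}$ control units ($A=0$) and $n_{l(1)}$ treated units ($A=1$), $n_l=n_{l(0)}+n_{l(1)}$. Let $\sigma_0^2>0$, $\sigma^2=1+\sigma_0^2$, $\rho=1/\sigma^2$, and let $\boldsymbol\Sigma$ be block diagonal (units ordered by block) with $l$-th block $\boldsymbol\Sigma_l=\sigma^2[(1-\rho)\boldsymbol I_{n_l}+\rho\boldsymbol J_{n_l}]=\boldsymbol J_{n_l}+\sigma_0^2\boldsymbol I_{n_l}$, where $\boldsymbol J_m$ is the $m\times m$ all-ones matrix. Let $(\hat\mu,\hat\tau)'=\big[X'\boldsymbol\Sigma^{-1}X\big]^{-1}X'\boldsymbol\Sigma^{-1}\boldsymbol Y_n$ with $X=(\boldsymbol 1_n,\boldsymbol A_n)$. Let $\bar Y_{l(a)}$ be the mean outcome of group $a$ in block $l$, $q_l=(1-\rho+\rho n_l)^{-1}$, and (all sums over $l=1,\dots,L$) $$C_1=\textstyle\sum q_ln_l\cdot\sum q_ln_{l(1)}n_{l(0)}(\bar Y_{l(1)}-\bar Y_{l(0)}),\quad C_2=\sum q_ln_{l(0)}\cdot\sum q_ln_{l(1)}\bar Y_{l(1)}-\sum q_ln_{l(1)}\cdot\sum q_ln_{l(0)}\bar Y_{l(0)},$$ $$D_1=\textstyle\sum q_ln_l\cdot\sum q_ln_{l(1)}n_{l(0)},\qquad D_2=\sum q_ln_{l(1)}\cdot\sum q_ln_{l(0)}.$$ Assume $D_1>0$ and $D_2>0$.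 Then $$\hat\tau=\lambda\hat\tau_1+(1-\lambda)\hat\tau_0,\qquad \hat\tau_1=\frac{C_1}{D_1},\quad \hat\tau_0=\frac{C_2}{D_2},\quad \lambda=\frac{\rho D_1}{\rho D_1+(1-\rho)D_2}.$$
   Context: This is the generalized least squares (posterior mean for fixed covariance, flat prior) estimate of the treatment effect in the nonparametric GP model $\boldsymbol Y_n\sim MVN(\mu\boldsymbol 1_n+\tau\boldsymbol A_n,\boldsymbol\Sigma)$, $\boldsymbol\Sigma=\boldsymbol K+\sigma_0^2\boldsymbol I_n$, where $\boldsymbol K=(k_{ij})$ encodes a known matching structure with $k_{ij}=1$ if units $i,j$ are in the same block (matched) and $k_{ij}=0$ otherwise. $\boldsymbol A_n=(A_1,\dots,A_n)'$ is the treatment indicator vector. *)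

(* Defs.v *)
From HB Require Import structures.
From mathcomp Require Import all_boot all_order all_algebra.
Set Implicit Arguments. Unset Strict Implicit. Unset Printing Implicit Defensive.
Import Order.TTheory GRing.Theory Num.Theory.
Local Open Scope ring_scope.

Section GLS.
Variables (R : realFieldType) (n L : nat).
Variables (blk : 'I_n -> 'I_L) (A : 'I_n -> bool) (Y : 'cV[R]_n) (s0sq : R).

Definition Sigma : 'M[R]_n :=
  \matrix_(i, j) (((blk i == blk j) : nat)%:R + s0sq * ((i == j) : nat)%:R).

Definition Xdes : 'M[R]_(n, 2) :=
  \matrix_(i, j) (if j == ord0 then 1 else ((A i) : nat)%:R).

Definition gls_est : 'cV[R]_2 :=
  invmx (Xdes^T *m invmx Sigma *m Xdes) *m Xdes^T *m invmx Sigma *m Y.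

Definition tau_hat : R := gls_est (lift ord0 ord0) ord0.

Definition rho : R := (1 + s0sq)^-1.

Definition nla (l : 'I_L) (a : bool) : R :=
  #|[set i : 'I_n | (blk i == l) && (A i == a)]|%:R.
Definition nl (l : 'I_L) : R := nla l false + nla l true.

Definition Ybar (l : 'I_L) (a : bool) : R :=
  (\sum_(i < n | (blk i == l) && (A i == a)) Y i ord0) / nla l a.

Definition q (l : 'I_L) : R := (1 - rho + rho * nl l)^-1.

Definition C1 : R :=
  (\sum_(l < L) q l * nl l) *
  (\sum_(l < L) q l * nla l true * nla l false * (Ybar l true - Ybar l false)).
Definition C2 : R :=
  (\sum_(l < L) q l * nla l false) * (\sum_(l < L) q l * nla l true * Ybar l true)
  - (\sum_(l < L) q l * nla l true) * (\sum_(l < L) q l * nla l false * Ybar l false).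
Definition D1 : R :=
  (\sum_(l < L) q l * nl l) * (\sum_(l < L) q l * nla l true * nla l false).
Definition D2 : R :=
  (\sum_(l < L) q l * nla l true) * (\sum_(l < L) q l * nla l false).

Definition tau1_hat : R := C1 / D1.
Definition tau0_hat : R := C2 / D2.
Definition lambda : R := rho * D1 / (rho * D1 + (1 - rho) * D2).

End GLS.

(* Main.v *)
Require Import Defs.
From HB Require Import structures.
From mathcomp Require Import all_boot all_order all_algebra.
From mathcomp Require Import ring lra.
Import Order.TTheory GRing.Theory Num.Theory.
Local Open Scope ring_scope.
Set Implicit Arguments. Unset Strict Implicit. Unset Printing Implicit Defensive.

Section Aux.
Variables (R : realFieldType) (n L : nat).
Variables (blk : 'I_n -> 'I_L) (A : 'I_n -> bool) (Y : 'cV[R]_n) (s : R).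
Hypothesis hs : 0 < s.

Local Notation ind b := ((b : nat)%:R : R).

Definition bs (f : 'I_n -> R) l := \sum_(i | blk i == l) f i.
Definition bsa (f : 'I_n -> R) l a := \sum_(i | (blk i == l) && (A i == a)) f i.

Lemma bs_split f l : bs f l = bsa f l true + bsa f l false.
Proof.
rewrite /bs (bigID (fun i => A i)) /=; congr (_ + _); apply: eq_bigl => i;
by case: (A i); rewrite ?andbT ?andbF.
Qed.

Lemma bsa_set f l a :
  bsa f l a = \sum_(i in [set i | (blk i == l) && (A i == a)]) f i.
Proof. by apply: eq_bigl => i; rewrite inE. Qed.

Lemma nla_bsa l a : nla R blk A l a = bsa (fun=> 1) l a.
Proof. by rewrite bsa_set sumr_const. Qed.

Lemma nY l a : nla R blk A l a * Ybar blk A Y l a = bsa (fun i => Y i ord0) l a.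
Proof.
rewrite /Ybar; have [e|nz] := eqVneq (nla R blk A l a) 0.
  rewrite e mul0r; have /cards0_eq E : #|[set i | (blk i == l) && (A i == a)]| = 0%N.
    by apply/eqP; rewrite -(pnatr_eq0 R); apply/eqP; exact: e.
  by rewrite bsa_set E big_set0.
by rewrite mulrC -mulrA mulVf // mulr1.
Qed.


Lemma sum_delta (i : 'I_n) (F : 'I_n -> R) : \sum_k ind (i == k) * F k = F i.
Proof.
rewrite (bigD1 i) //= eqxx mul1r big1 ?addr0 // => k /negbTE.
by rewrite eq_sym => ->; rewrite mul0r.
Qed.

Lemma sum_ind_bs l (F : 'I_n -> R) : \sum_k ind (l == blk k) * F k = bs F l.
Proof.
rewrite /bs [RHS]big_mkcond; apply: eq_bigr => k _; rewrite eq_sym.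
by case: (blk k == l); rewrite /= ?mul1r ?mul0r.
Qed.

Lemma sum_delta' (j : 'I_n) (F : 'I_n -> R) : \sum_k ind (k == j) * F k = F j.
Proof. by rewrite -(sum_delta j); apply: eq_bigr => k _; rewrite eq_sym. Qed.

Lemma nla_ge0 l a : 0 <= nla R blk A l a.
Proof. exact: ler0n. Qed.

Lemma nl_ge0 l : 0 <= nl R blk A l.
Proof. by rewrite /nl addr_ge0 // nla_ge0. Qed.

Lemma bs1 l : bs (fun=> 1) l = nl R blk A l.
Proof. by rewrite bs_split /nl -!nla_bsa addrC. Qed.

Lemma s1_neq0 : 1 + s != 0.
Proof. by rewrite gt_eqF // ltr_wpDr // ltW. Qed.

Lemma rho_eq : rho s = (1 + s)^-1.
Proof. by []. Qed.

Lemma qden l : 1 - rho s + rho s * nl R blk A l = (s + nl R blk A l) / (1 + s).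
Proof. rewrite /rho; field; exact: s1_neq0. Qed.

Lemma qden_neq0 l : 1 - rho s + rho s * nl R blk A l != 0.
Proof.
rewrite qden mulf_neq0 ?invr_neq0 ?s1_neq0 //.
by rewrite gt_eqF // ltr_wpDr // nl_ge0.
Qed.

Lemma qE l : q blk A s l * (1 - rho s + rho s * nl R blk A l) = 1.
Proof. by rewrite /q mulVf // qden_neq0. Qed.

Lemma rq l : rho s * q blk A s l * (nl R blk A l + s) = 1.
Proof.
have := qE l; rewrite qden /rho => h.
by rewrite -[RHS]h /rho; ring.
Qed.

Lemma sum_ind_nl l : \sum_k ind (l == blk k) = nl R blk A l.
Proof. by rewrite -bs1 -sum_ind_bs; apply: eq_bigr => k _; rewrite mulr1. Qed.

Definition Sinv : 'M[R]_n :=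
  \matrix_(i, j) (s^-1 * (ind (i == j) - rho s * q blk A s (blk i) * ind (blk i == blk j))).

Lemma SigmaSinv : Sigma blk s *m Sinv = 1%:M.
Proof.
apply/matrixP => i j; rewrite !mxE.
under eq_bigr do rewrite !mxE mulrDl.
rewrite big_split /=.
rewrite [X in _ + X](eq_bigr (fun k => ind (i == k) * (s * (s^-1 * (ind (k == j) - rho s * q blk A s (blk k) * ind (blk k == blk j)))))); last first.
  by move=> k _; rewrite -mulrA mulrCA.
rewrite sum_delta.
rewrite (eq_bigr (fun k => s^-1 * (ind (k == j) * ind (blk i == blk j)
    - rho s * (ind (blk i == blk k) * (q blk A s (blk i) * ind (blk i == blk j)))))); last first.
  move=> k _; rewrite mulrCA; congr (_ * _).
  have [->|kj] := eqVneq k j.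
    have [e|ne] := eqVneq (blk i) (blk j).
      by rewrite ?e ?eqxx /=; ring.
    by rewrite ?eqxx ?(negbTE ne) /=; ring.
  rewrite ?(negbTE kj) /=.
  have [e|ne] := eqVneq (blk i) (blk k); first by rewrite ?e ?eqxx /=; ring.
  by rewrite ?(negbTE ne) /=; ring.
rewrite -mulr_sumr sumrB sum_delta' -mulr_sumr -mulr_suml sum_ind_nl.
have h := rq (blk i); have nz : s != 0 by rewrite gt_eqF.
apply/eqP; rewrite -subr_eq0; apply/eqP.
transitivity (s^-1 * ind (blk i == blk j) *
   (1 - rho s * q blk A s (blk i) * (nl R blk A (blk i) + s))); first by field.
by rewrite h subrr mulr0.
Qed.

Lemma invSigma : invmx (Sigma blk s) = Sinv.
Proof.
have [u _] := mulmx1_unit SigmaSinv.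
by rewrite -[RHS]mul1mx -(mulVmx u) -mulmxA SigmaSinv mulmx1.
Qed.

Lemma entry m k (X : 'M[R]_(n, m)) (Z : 'M[R]_(n, k)) a b :
  (X^T *m Sinv *m Z) a b = \sum_i \sum_j X i a * Sinv i j * Z j b.
Proof.
rewrite mxE (eq_bigr (fun j => \sum_i X i a * Sinv i j * Z j b)); last first.
  by move=> j _; rewrite mxE mulr_suml; apply: eq_bigr => i _; rewrite mxE.
by rewrite exchange_big.
Qed.

Lemma quad (f g : 'I_n -> R) :
  \sum_i \sum_j f i * Sinv i j * g j =
  s^-1 * \sum_l (bs (fun i => f i * g i) l
                 - rho s * q blk A s l * bs f l * bs g l).
Proof.
rewrite (eq_bigr (fun i => s^-1 * (f i * g i
      - rho s * q blk A s (blk i) * f i * bs g (blk i)))); last first.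
  move=> i _.
  rewrite (eq_bigr (fun j => s^-1 * (ind (i == j) * (f i * g j)
      - rho s * q blk A s (blk i) * f i * (ind (blk i == blk j) * g j)))); last first.
    by move=> j _; rewrite mxE; ring.
  by rewrite -mulr_sumr sumrB sum_delta -mulr_sumr sum_ind_bs.
rewrite -mulr_sumr; congr (_ * _).
rewrite (partition_big blk predT) //=; apply: eq_bigr => l _.
rewrite sumrB; congr (_ - _).
rewrite /bs; transitivity (\sum_(i | blk i == l)
   rho s * q blk A s l * f i * \sum_(i0 | blk i0 == l) g i0).
  by apply: eq_bigr => i /eqP ->.
by rewrite -mulr_suml -mulr_sumr.
Qed.

Local Notation n1 l := (nla R blk A l true).
Local Notation n0 l := (nla R blk A l false).
Local Notation S1 l := (bsa (fun i => Y i ord0) l true).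
Local Notation S0 l := (bsa (fun i => Y i ord0) l false).

Lemma bsa_A (h : 'I_n -> R) l : bsa (fun i => ind (A i) * h i) l true = bsa h l true.
Proof. by apply: eq_bigr => i /andP[_ /eqP ->]; rewrite mul1r. Qed.

Lemma bsa_A0 (h : 'I_n -> R) l : bsa (fun i => ind (A i) * h i) l false = 0.
Proof. by apply: big1 => i /andP[_ /eqP ->]; rewrite mul0r. Qed.

Lemma bsA l : bs (fun i => ind (A i)) l = n1 l.
Proof.
rewrite bs_split nla_bsa.
transitivity (bsa (fun i => ind (A i) * 1) l true + bsa (fun i => ind (A i) * 1) l false).
  by congr (_ + _); apply: eq_bigr => i _; rewrite mulr1.
by rewrite bsa_A bsa_A0 addr0.
Qed.

Lemma bsAh (h : 'I_n -> R) l : bs (fun i => ind (A i) * h i) l = bsa h l true.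
Proof. by rewrite bs_split bsa_A bsa_A0 addr0. Qed.

Lemma bs11 l : bs (fun _ => 1 * 1) l = nl R blk A l.
Proof. by rewrite -bs1; apply: eq_bigr => i _; rewrite mulr1. Qed.

Lemma bs1A l : bs (fun i => 1 * ind (A i)) l = n1 l.
Proof. by rewrite -bsA; apply: eq_bigr => i _; rewrite mul1r. Qed.

Lemma bsA1 l : bs (fun i => ind (A i) * 1) l = n1 l.
Proof. by rewrite -bsA; apply: eq_bigr => i _; rewrite mulr1. Qed.

Lemma bsAA l : bs (fun i => ind (A i) * ind (A i)) l = n1 l.
Proof. by rewrite bsAh nla_bsa; apply: eq_bigr => i /andP[_ /eqP ->]. Qed.

Lemma bsY l : bs (fun i => Y i ord0) l = S1 l + S0 l.
Proof. by rewrite bs_split. Qed.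

Lemma bs1Y l : bs (fun i => 1 * Y i ord0) l = S1 l + S0 l.
Proof. by rewrite -bsY; apply: eq_bigr => i _; rewrite mul1r. Qed.

Lemma bsAY l : bs (fun i => ind (A i) * Y i ord0) l = S1 l.
Proof. by rewrite bsAh. Qed.

Lemma Mform m k (X : 'M[R]_(n, m)) (Z : 'M[R]_(n, k)) a b (f g : 'I_n -> R) :
  (forall i, X i a = f i) -> (forall i, Z i b = g i) ->
  (X^T *m Sinv *m Z) a b = s^-1 * \sum_l (bs (fun i => f i * g i) l
                 - rho s * q blk A s l * bs f l * bs g l).
Proof.
move=> hf hg; rewrite entry -quad; apply: eq_bigr => i _; apply: eq_bigr => j _.
by rewrite hf hg.
Qed.

Lemma keyid l (X LHS RHS : R) :
  LHS - RHS = X * (1 - q blk A s l * (1 - rho s + rho s * nl R blk A l)) -> LHS = RHS.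
Proof. by rewrite qE subrr mulr0 => /eqP; rewrite subr_eq0 => /eqP. Qed.

Local Notation X := (Xdes R A).
Local Notation i1 := (lift ord0 ord0 : 'I_2).
Local Notation qq := (q blk A s).
Local Notation rh := (rho s).

Lemma X0 i : X i ord0 = 1. Proof. by rewrite mxE. Qed.
Lemma X1 i : X i i1 = ind (A i). Proof. by rewrite mxE. Qed.

Definition Nn := \sum_l qq l * nl R blk A l.
Definition N1 := \sum_l qq l * n1 l.
Definition N0 := \sum_l qq l * n0 l.
Definition PP := \sum_l qq l * n1 l * n0 l.
Definition U1 := \sum_l qq l * S1 l.
Definition U0 := \sum_l qq l * S0 l.
Definition TT := \sum_l qq l * (n0 l * S1 l - n1 l * S0 l).

Local Notation M := (X^T *m Sinv *m X).
Local Notation v := (X^T *m Sinv *m Y).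

Lemma M00E : M ord0 ord0 = s^-1 * ((1 - rh) * Nn).
Proof.
rewrite (@Mform _ _ _ _ _ _ (fun=> 1) (fun=> 1) X0 X0); congr (_ * _).
rewrite /Nn mulr_sumr; apply: eq_bigr => l _; rewrite bs11 bs1.
by apply: (@keyid l (nl R blk A l)); ring.
Qed.

Lemma M01E : M ord0 i1 = s^-1 * ((1 - rh) * N1).
Proof.
rewrite (@Mform _ _ _ _ _ _ (fun=> 1) (fun i => ind (A i)) X0 X1); congr (_ * _).
rewrite /N1 mulr_sumr; apply: eq_bigr => l _; rewrite bs1A bs1 bsA.
by apply: (@keyid l (n1 l)); ring.
Qed.

Lemma M10E : M i1 ord0 = s^-1 * ((1 - rh) * N1).
Proof.
rewrite (@Mform _ _ _ _ _ _ (fun i => ind (A i)) (fun=> 1) X1 X0); congr (_ * _).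
rewrite /N1 mulr_sumr; apply: eq_bigr => l _; rewrite bsA1 bs1 bsA.
by apply: (@keyid l (n1 l)); ring.
Qed.

Lemma M11E : M i1 i1 = s^-1 * ((1 - rh) * N1 + rh * PP).
Proof.
rewrite (@Mform _ _ _ _ _ _ (fun i => ind (A i)) (fun i => ind (A i)) X1 X1); congr (_ * _).
rewrite /N1 /PP !mulr_sumr -big_split; apply: eq_bigr => l _; rewrite bsAA bsA.
by apply: (@keyid l (n1 l)); rewrite /nl /=; ring.
Qed.

Lemma v0E : v ord0 ord0 = s^-1 * ((1 - rh) * (U1 + U0)).
Proof.
rewrite (@Mform _ _ _ _ _ _ (fun=> 1) (fun i => Y i ord0) X0 (fun i => erefl)); congr (_ * _).
rewrite /U1 /U0 -big_split mulr_sumr; apply: eq_bigr => l _; rewrite bs1Y bs1 bsY.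
by apply: (@keyid l (S1 l + S0 l)); rewrite /=; ring.
Qed.

Lemma v1E : v i1 ord0 = s^-1 * ((1 - rh) * U1 + rh * TT).
Proof.
rewrite (@Mform _ _ _ _ _ _ (fun i => ind (A i)) (fun i => Y i ord0) X1 (fun i => erefl)); congr (_ * _).
rewrite /U1 /TT !mulr_sumr -big_split; apply: eq_bigr => l _; rewrite bsAY bsA bsY.
by apply: (@keyid l (S1 l)); rewrite /nl /=; ring.
Qed.

Lemma det22 (F : comNzRingType) (B : 'M[F]_2) :
  \det B = B ord0 ord0 * B i1 i1 - B ord0 i1 * B i1 ord0.
Proof.
rewrite (expand_det_row _ ord0) !big_ord_recl big_ord0 /cofactor !det_mx11 !mxE /=.
have e1 : lift ord0 (0 : 'I_1) = lift ord0 ord0 :> 'I_2 by apply/val_inj.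
have e2 : lift (lift ord0 ord0) (0:'I_1) = ord0 :> 'I_2 by apply/val_inj.
rewrite e1 e2 /bump /= expr0 expr1; ring.
Qed.

Lemma tauE : M ord0 ord0 * M i1 i1 - M ord0 i1 * M i1 ord0 != 0 ->
  tau_hat blk A Y s = (M ord0 ord0 * v i1 ord0 - M i1 ord0 * v ord0 ord0)
                      / (M ord0 ord0 * M i1 i1 - M ord0 i1 * M i1 ord0).
Proof.
move=> dnz; rewrite /tau_hat /gls_est invSigma.
have -> : invmx M *m X^T *m Sinv *m Y = invmx M *m v by rewrite !mulmxA.
have Mu : M \in unitmx by rewrite unitmxE det22 unitfE.
have hg : M *m (invmx M *m v) = v by rewrite mulKVmx.
have e0 := congr1 (fun B : 'M[R]_(2,1) => B ord0 ord0) hg.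
have e1 := congr1 (fun B : 'M[R]_(2,1) => B i1 ord0) hg.
move: e0 e1; set g := invmx M *m v; set vv := v; set MM := M => /= e0 e1.
rewrite mxE !big_ord_recl big_ord0 addr0 in e0.
rewrite mxE !big_ord_recl big_ord0 addr0 in e1.
rewrite -e0 -e1; field; exact: dnz.
Qed.

Lemma NnE : Nn = N0 + N1.
Proof. by rewrite /Nn /N0 /N1 -big_split; apply: eq_bigr => l _; rewrite /nl mulrDr. Qed.

Lemma C1E : C1 blk A Y s = Nn * TT.
Proof.
rewrite /C1; congr (_ * _); apply: eq_bigr => l _.
rewrite -!nY; ring.
Qed.

Lemma C2E : C2 blk A Y s = N0 * U1 - N1 * U0.
Proof.
rewrite /C2; congr (_ * _ - _ * _); apply: eq_bigr => l _; by rewrite -nY mulrA.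
Qed.

Lemma D1E : D1 blk A s = Nn * PP. Proof. by []. Qed.
Lemma D2E : D2 blk A s = N1 * N0. Proof. by []. Qed.

End Aux.


Lemma det_alg (R : realFieldType) (s r a b P : R) :
  s^-1 * ((1 - r) * (a + b)) * (s^-1 * ((1 - r) * b + r * P))
  - s^-1 * ((1 - r) * b) * (s^-1 * ((1 - r) * b))
  = s^-1 * s^-1 * (1 - r) * (r * ((a + b) * P) + (1 - r) * (b * a)).
Proof. ring. Qed.

Lemma det_nz (R : realFieldType) (s r a b P : R) :
  s != 0 -> 0 < r -> 0 < 1 - r -> 0 < (a + b) * P -> 0 < b * a ->
  s^-1 * ((1 - r) * (a + b)) * (s^-1 * ((1 - r) * b + r * P))
  - s^-1 * ((1 - r) * b) * (s^-1 * ((1 - r) * b)) != 0.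
Proof.
move=> snz rp r1 h1 h2; rewrite det_alg.
have K : 0 < r * ((a + b) * P) + (1 - r) * (b * a) by rewrite addr_gt0 // mulr_gt0.
by rewrite !mulf_neq0 ?invr_neq0 // gt_eqF.
Qed.

Lemma final_alg (R : realFieldType) (s r a b P T u1 u0 : R) :
  s != 0 -> 0 < r -> 0 < 1 - r -> 0 < (a + b) * P -> 0 < b * a ->
  (s^-1 * ((1 - r) * (a + b)) * (s^-1 * ((1 - r) * u1 + r * T))
   - s^-1 * ((1 - r) * b) * (s^-1 * ((1 - r) * (u1 + u0)))) /
  (s^-1 * ((1 - r) * (a + b)) * (s^-1 * ((1 - r) * b + r * P))
   - s^-1 * ((1 - r) * b) * (s^-1 * ((1 - r) * b)))
  = r * ((a + b) * P) / (r * ((a + b) * P) + (1 - r) * (b * a)) *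
    ((a + b) * T / ((a + b) * P)) +
    (1 - r * ((a + b) * P) / (r * ((a + b) * P) + (1 - r) * (b * a))) *
    ((a * u1 - b * u0) / (b * a)).
Proof.
move=> snz rp r1 h1 h2.
have K : r * ((a + b) * P) + (1 - r) * (b * a) != 0.
  by rewrite gt_eqF // addr_gt0 // mulr_gt0.
have ab : a + b != 0 by move: h1; apply: contraTneq => ->; rewrite mul0r ltxx.
have Pn : P != 0 by move: h1; apply: contraTneq => ->; rewrite mulr0 ltxx.
have an : a != 0 by move: h2; apply: contraTneq => ->; rewrite mulr0 ltxx.
have bn : b != 0 by move: h2; apply: contraTneq => ->; rewrite mul0r ltxx.
have rn : 1 - r != 0 by rewrite gt_eqF.
rewrite det_alg; field.
by rewrite K rn snz ab Pn an bn.
Qed.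

Theorem mainTheorem3 (R : realFieldType) (n L : nat)
    (blk : 'I_n -> 'I_L) (A : 'I_n -> bool) (Y : 'cV[R]_n) (s0sq : R)
    (hs0 : 0 < s0sq)
    (hD1 : 0 < D1 blk A s0sq)
    (hD2 : 0 < D2 blk A s0sq) :
  tau_hat blk A Y s0sq =
    lambda blk A s0sq * tau1_hat blk A Y s0sq
    + (1 - lambda blk A s0sq) * tau0_hat blk A Y s0sq.
Proof.
have snz : s0sq != 0 by rewrite gt_eqF.
have s1 : 0 < 1 + s0sq by rewrite ltr_wpDl // ltW.
have rp : 0 < rho s0sq by rewrite /rho invr_gt0.
have r1 : 0 < 1 - rho s0sq.
  have -> : 1 - rho s0sq = s0sq / (1 + s0sq) by rewrite /rho; field; rewrite gt_eqF.
  by rewrite divr_gt0.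
rewrite /tau1_hat /tau0_hat /lambda.
move: hD1 hD2; rewrite D1E D2E C1E C2E => hD1 hD2.
rewrite NnE in hD1.
rewrite tauE //; last first.
  by rewrite ?M00E ?M01E ?M10E ?M11E // NnE det_nz.
rewrite ?M00E ?M01E ?M10E ?M11E ?v0E ?v1E // NnE.
exact: final_alg.
Qed.
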